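(* For every $n\in\{2,6,10,\dots\}$, the greedy local search procedure applied to $g_n$ starting from the zero vector has no ties at any step (so its path is uniquely determined), it terminates at the unique local maximum of $g_n$, namely the complement of the characteristic vector of the set $\{4,8,\dots,n-2\}$ (i.e. the vector with $x_i=0$ for $i\in\{4,8,\dots,n-2\}$ and $x_i=1$ otherwise), and the path has length greater than $2^{n/4}$. In particular greedy local search takes exponentially many steps, both in $n$ and in the size of $g_n$.
   Context: For $n\in\{2,6,10,\dots\}$ define polynomials $g_n$ in variables $x_1,\dots,x_n$ (evaluated on $\{0,1\}^n$) recursively: $g_2(x_1,x_2):=2x_1+x_2$, and, with $\mathbf{x}=(x_1,\dots,x_n)$ and $M_n:=4\big(\max_{\{0,1\}^n} g_n-\min_{\{0,1\}^n} g_n\big)$, $g_{n+4}(\mathbf{x},x_{n+1},x_{n+2},x_{n+3},x_{n+4}) := 4g_n(\mathbf{x}) + 3x_{n+1} - \sum_{i=1}^n (2M_n+i+2)x_i x_{n+2} + 3M_n n\, x_{n+1}x_{n+2} + 2x_{n+3} + M_n x_{n+1}x_{n+3} - 4M_n n\, x_{n+2}x_{n+4} + 5M_n n\, x_{n+3}x_{n+4}$. Greedy local search on $f:\{0,1\}^m\to\mathbb{R}$: starting from a vertex, at each step, if some neighbor (vertex differing in exactly one coordinate) has strictly larger value, move to a neighbor with the largest value among all neighbors; otherwise stop (the current vertex is a local maximum). A tie occurs if two distinct neighbors attain this largest value. The length of the path is the number of moves. *)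

(* Defs.v *)
From mathcomp Require Import all_boot all_order all_algebra.
Set Implicit Arguments. Unset Strict Implicit. Unset Printing Implicit Defensive.
Import Order.TTheory GRing.Theory Num.Theory.
Local Open Scope ring_scope.

(* A vertex of {0,1}^n is v : {ffun 'I_n -> bool}; coordinate x_c (1 <= c <= n)
   is v (c-1).  [emb v] is the 1-indexed 0/1 integer vector, 0 outside 1..n. *)
Definition emb (n : nat) (v : {ffun 'I_n -> bool}) : nat -> int :=
  fun c => if c is c'.+1 then oapp (fun i : 'I_n => ((v i : bool) : nat)%:Z) 0 (insub c')
           else 0.

Definition cube_max (n : nat) (f : (nat -> int) -> int) : int :=
  \big[Order.max/f (emb [ffun _ : 'I_n => false])]_(v : {ffun 'I_n -> bool}) f (emb v).
Definition cube_min (n : nat) (f : (nat -> int) -> int) : int :=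
  \big[Order.min/f (emb [ffun _ : 'I_n => false])]_(v : {ffun 'I_n -> bool}) f (emb v).

(* gk k = g_{4k+2}, a function of x_1, ..., x_{4k+2} *)
Fixpoint gk (k : nat) : (nat -> int) -> int :=
  match k with
  | 0%N => fun x => 2 * x 1%N + x 2%N
  | k'.+1 =>
      let g := gk k' in
      let n := (4 * k' + 2)%N in
      let M := 4 * (cube_max n g - cube_min n g) in
      fun x =>
        4 * g x + 3 * x n.+1
        - \sum_(1 <= i < n.+1) (2 * M + i%:Z + 2) * x i * x n.+2
        + 3 * M * n%:Z * x n.+1 * x n.+2
        + 2 * x n.+3
        + M * x n.+1 * x n.+3
        - 4 * M * n%:Z * x n.+2 * x n.+4
        + 5 * M * n%:Z * x n.+3 * x n.+4
  end.

Definition g (n : nat) (v : {ffun 'I_n -> bool}) : int := gk (n %/ 4) (emb v).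

Definition flip (n : nat) (i : 'I_n) (v : {ffun 'I_n -> bool}) : {ffun 'I_n -> bool} :=
  [ffun j => if j == i then ~~ v j else v j].

Definition is_local_max (n : nat) (f : {ffun 'I_n -> bool} -> int) (v : {ffun 'I_n -> bool}) :=
  forall i : 'I_n, f (flip i v) <= f v.

Definition greedy_step_unique (n : nat) (f : {ffun 'I_n -> bool} -> int)
    (v u : {ffun 'I_n -> bool}) :=
  [/\ exists i : 'I_n, u = flip i v,
      f v < f u &
      forall i : 'I_n, flip i v != u -> f (flip i v) < f u].

(* p = [:: v_0; v_1; ...; v_L] is the greedy local search path from v_0 with
   no ties at any step, ending at a local maximum (length L = size p - 1). *)
Definition greedy_path_no_ties (n : nat) (f : {ffun 'I_n -> bool} -> int)
    (p : seq {ffun 'I_n -> bool}) :=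
  [/\ (0 < size p)%N,
      forall t : nat, (t.+1 < size p)%N ->
        greedy_step_unique f (nth [ffun=> false] p t) (nth [ffun=> false] p t.+1)
    & is_local_max f (last [ffun=> false] p)].

(* complement of the characteristic vector of {4,8,...,n-2} (1-indexed) *)
Definition target (n : nat) : {ffun 'I_n -> bool} :=
  [ffun i : 'I_n => ~~ ((4 %| i.+1) && (i.+1 <= n - 2))%N].

(* Main.v *)
Require Import Defs.
From mathcomp Require Import all_boot all_order all_algebra.
From mathcomp Require Import zify ring lra.
From Stdlib Require Import FunctionalExtensionality.
Import Order.TTheory GRing.Theory Num.Theory.
Local Open Scope ring_scope.
Set Implicit Arguments. Unset Strict Implicit.

Definition st := nat -> bool.
Definition fl (c : nat) (x : st) : st := fun d => if d == c then ~~ x d else x d.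
Definition bx (x : st) : nat -> int := fun c => ((x c : bool) : nat)%:Z.
Definition inr (N c : nat) : bool := (0 < c <= N)%N.
Definition agree N (x y : st) := forall c, inr N c -> x c = y c.
Definition z : st := fun _ => false.

Lemma flK c x : fl c (fl c x) = x.
Proof. apply: functional_extensionality => d; rewrite /fl; by case: (d == c); rewrite ?negbK. Qed.
Lemma fl_comm c j x : fl c (fl j x) = fl j (fl c x).
Proof. apply: functional_extensionality => d; rewrite /fl; by case: (d == c); case: (d == j). Qed.
Lemma fl_eq c x : fl c x c = ~~ x c.
Proof. by rewrite /fl eqxx. Qed.
Lemma fl_ne c x d : d != c -> fl c x d = x d.
Proof. by rewrite /fl => /negbTE ->. Qed.
Lemma bx_fl_eq c x : bx (fl c x) c = 1 - bx x c.
Proof. by rewrite /bx fl_eq; case: (x c). Qed.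
Lemma bx_fl_ne c x d : d != c -> bx (fl c x) d = bx x d.
Proof. by move=> h; rewrite /bx fl_ne. Qed.
Lemma bxT (x : st) d : x d -> bx x d = 1.
Proof. by rewrite /bx => ->. Qed.
Lemma bxF (x : st) d : x d = false -> bx x d = 0.
Proof. by rewrite /bx => ->. Qed.
Lemma bx_ge0 x d : 0 <= bx x d. Proof. by rewrite /bx; case: (x d). Qed.
Lemma bx_le1 x d : bx x d <= 1. Proof. by rewrite /bx; case: (x d). Qed.
Lemma agree_fl N c x y : agree N x y -> agree N (fl c x) (fl c y).
Proof. move=> h d hd; rewrite /fl h //. Qed.

Fixpoint run (x : st) (js : seq nat) : st := if js is j :: js' then run (fl j x) js' else x.
Fixpoint states (x : st) (js : seq nat) : seq st :=
  if js is j :: js' then x :: states (fl j x) js' else [:: x].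

Lemma run_cat x js1 js2 : run x (js1 ++ js2) = run (run x js1) js2.
Proof. by elim: js1 x => //= j js IH x; rewrite IH. Qed.
Lemma run_fl c x js : c \notin js -> run (fl c x) js = fl c (run x js).
Proof.
elim: js x => //= j js IH x; rewrite in_cons negb_or => /andP[h1 h2].
by rewrite fl_comm IH.
Qed.
Lemma size_states x js : size (states x js) = (size js).+1.
Proof. by elim: js x => //= j js IH x; rewrite IH. Qed.
Lemma last_states y x js : last y (states x js) = run x js.
Proof. by elim: js x y => //= j js IH x y; rewrite IH. Qed.
Lemma head_states x js : head z (states x js) = x.
Proof. by case: js. Qed.

Section Paths.
Variables (f : st -> int) (N : nat).
Definition ustep (x : st) j := [/\ inr N j, f x < f (fl j x) &
   forall i, inr N i -> i != j -> f (fl i x) < f (fl j x)].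
Fixpoint upath (x : st) js : Prop := if js is j :: js' then ustep x j /\ upath (fl j x) js' else True.
Definition locmax (x : st) := forall i, inr N i -> f (fl i x) <= f x.
Definition cost (x : st) i := f x - f (fl i x).
Fixpoint wpath (K : int) (x : st) js : Prop := if js is j :: js' then
  [/\ inr N j, x j, cost x j <= K,
      (forall (w : int) i, 1 <= w -> inr N i -> i != j -> x i ->
          w * cost x j - j%:Z < w * cost x i - i%:Z)
    & wpath K (fl j x) js'] else True.

Lemma upath_cat x js1 js2 : upath x js1 -> upath (run x js1) js2 -> upath x (js1 ++ js2).
Proof. by elim: js1 x => //= j js IH x [h1 h2] h3; split=> //; apply: IH. Qed.
Lemma upath_all x js : upath x js -> all (inr N) js.
Proof. by elim: js x => //= j js IH x [[h1 _ _] h2]; rewrite h1 (IH _ h2). Qed.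
Lemma wpath_all K x js : wpath K x js -> all (inr N) js.
Proof. by elim: js x => //= j js IH x [h1 _ _ _ h2]; rewrite h1 (IH _ h2). Qed.
Lemma upath_mono x js : upath x js -> f x <= f (run x js).
Proof.
elim: js x => //= j js IH x [[_ h1 _] h2]; apply: le_trans (IH _ h2).
exact: ltW.
Qed.
Lemma upath_nth x js t : upath x js -> (t < size js)%N ->
  ustep (nth z (states x js) t) (nth 0%N js t) /\
  nth z (states x js) t.+1 = fl (nth 0%N js t) (nth z (states x js) t).
Proof.
elim: js x t => //= j js IH x [|t] [h1 h2] ht //=.
  by split=> //; case: (js).
exact: IH.
Qed.

Hypothesis floc : forall x y, agree N x y -> f x = f y.
Lemma upath_agree x y js : agree N x y -> upath x js -> upath y js.
Proof.
elim: js x y => //= j js IH x y hxy [[h1 h2 h3] h4]; split; last first.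
  by apply: (IH (fl j x)) => //; apply: agree_fl.
split=> //.
  by rewrite -(floc hxy) -(floc (agree_fl j hxy)).
move=> i hi hij; rewrite -(floc (agree_fl j hxy)) -(floc (agree_fl i hxy)); exact: h3.
Qed.
Lemma locmax_agree x y : agree N x y -> locmax x -> locmax y.
Proof. by move=> hxy h i hi; rewrite -(floc hxy) -(floc (agree_fl i hxy)); apply: h. Qed.
End Paths.

Definition nk k := (4*k+2)%N.
Definition G k (x : st) := gk k (bx x).
Definition Mk k := 4 * (cube_max (nk k) (gk k) - cube_min (nk k) (gk k)).
Definition S k (x : st) := \sum_(1 <= i < (nk k).+1) (2 * Mk k + i%:Z + 2) * bx x i.

Lemma gkS k x : gk k.+1 x = 4 * gk k x + 3 * x (nk k).+1
        - \sum_(1 <= i < (nk k).+1) (2 * Mk k + i%:Z + 2) * x i * x (nk k).+2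
        + 3 * Mk k * (nk k)%:Z * x (nk k).+1 * x (nk k).+2
        + 2 * x (nk k).+3
        + Mk k * x (nk k).+1 * x (nk k).+3
        - 4 * Mk k * (nk k)%:Z * x (nk k).+2 * x (nk k).+4
        + 5 * Mk k * (nk k)%:Z * x (nk k).+3 * x (nk k).+4.
Proof. by []. Qed.

Lemma nkS k : nk k.+1 = (nk k).+4.
Proof. rewrite /nk; lia. Qed.

Lemma gk_local k (x y : nat -> int) : (forall c, (0 < c <= nk k)%N -> x c = y c) -> gk k x = gk k y.
Proof.
elim: k x y => [|k IH] x y h.
  by rewrite /= !h.
have h' : forall c, (0 < c <= nk k)%N -> x c = y c.
  by move=> c /andP[h1 h2]; apply: h; rewrite /nk in h2 *; apply/andP; split=> //; lia.
have E : \sum_(1 <= i < (nk k).+1) (2 * Mk k + i%:Z + 2) * x i * x (nk k).+2 =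
  \sum_(1 <= i < (nk k).+1) (2 * Mk k + i%:Z + 2) * y i * y (nk k).+2.
  apply: eq_big_nat => i /andP[h1 h2].
  rewrite !h //; rewrite /nk in h2 *; apply/andP; split=> //; lia.
rewrite !gkS (IH x y h') E !h //; rewrite /nk; apply/andP; split=> //; lia.
Qed.

Lemma G_local k x y : agree (nk k) x y -> G k x = G k y.
Proof. by move=> h; apply: gk_local => c hc; rewrite /bx h. Qed.

Definition tof n (x : st) : {ffun 'I_n -> bool} := [ffun i : 'I_n => x i.+1].

Lemma emb_tof n x c : (0 < c <= n)%N -> emb (tof n x) c = bx x c.
Proof.
case: c => // c /= hc.
have hc' : (c < n)%N by [].
rewrite insubT /= /tof ffunE /bx //.
Qed.

Lemma big_max_ge (T : finType) (F : T -> int) x0 v : F v <= \big[Order.max/x0]_(u : T) F u.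
Proof.
rewrite /index_enum; have: v \in Finite.enum T by rewrite -enumT mem_enum.
elim: (Finite.enum T) => // a s IH; rewrite in_cons big_cons => /orP[/eqP->|/IH h].
  by rewrite le_max lexx.
by rewrite le_max h orbT.
Qed.
Lemma big_min_le (T : finType) (F : T -> int) x0 v : \big[Order.min/x0]_(u : T) F u <= F v.
Proof.
rewrite /index_enum; have: v \in Finite.enum T by rewrite -enumT mem_enum.
elim: (Finite.enum T) => // a s IH; rewrite in_cons big_cons => /orP[/eqP->|/IH h].
  by rewrite ge_min lexx.
by rewrite ge_min h orbT.
Qed.

Lemma G_tof k x : gk k (emb (tof (nk k) x)) = G k x.
Proof. by apply: gk_local => c hc; rewrite emb_tof. Qed.

Lemma Mk_ge k x y : 4 * (G k x - G k y) <= Mk k.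
Proof.
rewrite /Mk ler_pM2l // -(G_tof k x) -(G_tof k y) lerB //.
  exact: (big_max_ge (fun v => gk k (emb v))).
exact: (big_min_le (fun v => gk k (emb v))).
Qed.

Section Dec.
Variable k : nat.
Local Notation n := (nk k).
Local Notation M := (Mk k).

Lemma Gdec x : G k.+1 x = 4 * G k x + 3 * bx x n.+1 - S k x * bx x n.+2
   + 3 * M * n%:Z * bx x n.+1 * bx x n.+2 + 2 * bx x n.+3 + M * bx x n.+1 * bx x n.+3
   - 4 * M * n%:Z * bx x n.+2 * bx x n.+4 + 5 * M * n%:Z * bx x n.+3 * bx x n.+4.
Proof. by rewrite /G gkS /S big_distrl. Qed.

Lemma G_fl_hi c x : (n < c)%N -> G k (fl c x) = G k x.
Proof. move=> h; apply: G_local => d hd; rewrite fl_ne //; apply/eqP; move: hd; rewrite /inr; lia. Qed.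

Lemma S_fl_hi c x : (n < c)%N -> S k (fl c x) = S k x.
Proof.
move=> h; apply: eq_big_nat => i hi; rewrite bx_fl_ne //; apply/eqP; lia.
Qed.

Lemma S_fl_lo c x : inr n c -> S k (fl c x) = S k x + (1 - 2 * bx x c) * (2 * M + c%:Z + 2).
Proof.
move=> hc; rewrite /S.
have -> : \sum_(1 <= i < n.+1) (2 * M + i%:Z + 2) * bx (fl c x) i =
  \sum_(1 <= i < n.+1) ((2 * M + i%:Z + 2) * bx x i +
     (if i == c then (1 - 2 * bx x c) * (2 * M + c%:Z + 2) else 0)).
  apply: eq_big_nat => i hi; case: eqP => [->|/eqP ne].
    by rewrite bx_fl_eq; ring.
  by rewrite bx_fl_ne // addr0.
rewrite big_split /= -big_mkcond big_nat1_eq.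
by move: hc; rewrite /inr ltnS => ->.
Qed.

Lemma S_ge0 x : 0 <= M -> 0 <= S k x.
Proof.
move=> hM; rewrite /S; apply: sumr_ge0 => i _; apply: mulr_ge0 (bx_ge0 _ _).
have := bx_ge0 x i; lia.
Qed.

Lemma S_le x : 0 <= M -> S k x <= n%:Z * (2 * M + n%:Z + 2).
Proof.
move=> hM; rewrite /S.
apply: (@le_trans _ _ (\sum_(1 <= i < n.+1) (2 * M + n%:Z + 2))).
  apply: ler_sum_nat => i /andP[h1 h2].
  have h3 := bx_ge0 x i; have h4 := bx_le1 x i.
  have h5 : (i%:Z <= n%:Z) by rewrite lez_nat; lia.
  nia.
rewrite sumr_const_nat subSS subn0.
have -> : forall (a : int) m, a *+ m = m%:Z * a by move=> a m; rewrite -mulr_natl natz.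
by [].
Qed.
Lemma dummy_S : True. Proof. by []. Qed.
Goal True. Proof. by [].

Qed.

Lemma S_z x : (forall i, inr n i -> x i = false) -> S k x = 0.
Proof.
move=> h; rewrite /S big1_seq // => i; rewrite mem_index_iota => hi.
by rewrite bxF ?mulr0 // h.
Qed.

Lemma gain_lo c x : inr n c -> G k.+1 (fl c x) = G k.+1 x
   + 4 * (G k (fl c x) - G k x) - bx x n.+2 * (1 - 2 * bx x c) * (2 * M + c%:Z + 2).
Proof.
move=> hc; have hn : forall d, (n < d)%N -> d != c.
  by move=> d hd; apply/eqP; move: hc; rewrite /inr; lia.
rewrite !Gdec S_fl_lo // !bx_fl_ne; try (apply: hn; lia).
ring.
Qed.

Ltac neqt := apply/eqP; lia.

Lemma gain1 x : G k.+1 (fl n.+1 x) = G k.+1 x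
   + (1 - 2 * bx x n.+1) * (3 + 3 * M * n%:Z * bx x n.+2 + M * bx x n.+3).
Proof.
rewrite !Gdec (@G_fl_hi n.+1) ?(@S_fl_hi n.+1) ?bx_fl_eq ?(@bx_fl_ne n.+1); try neqt; try lia; ring.
Qed.
Lemma gain2 x : G k.+1 (fl n.+2 x) = G k.+1 x
   + (1 - 2 * bx x n.+2) * (- S k x + 3 * M * n%:Z * bx x n.+1 - 4 * M * n%:Z * bx x n.+4).
Proof.
rewrite !Gdec (@G_fl_hi n.+2) ?(@S_fl_hi n.+2) ?bx_fl_eq ?(@bx_fl_ne n.+2); try neqt; try lia; ring.
Qed.
Lemma gain3 x : G k.+1 (fl n.+3 x) = G k.+1 x
   + (1 - 2 * bx x n.+3) * (2 + M * bx x n.+1 + 5 * M * n%:Z * bx x n.+4).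
Proof.
rewrite !Gdec (@G_fl_hi n.+3) ?(@S_fl_hi n.+3) ?bx_fl_eq ?(@bx_fl_ne n.+3); try neqt; try lia; ring.
Qed.
Lemma gain4 x : G k.+1 (fl n.+4 x) = G k.+1 x
   + (1 - 2 * bx x n.+4) * (- 4 * M * n%:Z * bx x n.+2 + 5 * M * n%:Z * bx x n.+3).
Proof.
rewrite !Gdec (@G_fl_hi n.+4) ?(@S_fl_hi n.+4) ?bx_fl_eq ?(@bx_fl_ne n.+4); try neqt; try lia; ring.
Qed.
End Dec.

Definition Tk k : st := fun c => ((0 < c <= nk k) && ~~ ((4 %| c) && (c <= 4*k)))%N.

Lemma Tk_hi k d : (nk k < d)%N -> Tk k d = false.
Proof. by move=> h; rewrite /Tk /nk in h *; lia. Qed.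

Lemma TkS k : Tk k.+1 = fl (nk k).+4 (fl (nk k).+3 (fl (nk k).+1 (Tk k))).
Proof.
apply: functional_extensionality => d; rewrite /fl /Tk /nk.
case: eqP => h1; case: eqP => h2; case: eqP => h3; lia.
Qed.

Lemma Tk_lo k d : (d <= nk k)%N -> Tk k.+1 d = Tk k d.
Proof. move=> h; rewrite /Tk /nk in h *; lia. Qed.

Section Step.
Variable k : nat.
Local Notation n := (nk k).
Local Notation M := (Mk k).
Hypothesis HMn : n%:Z ^+ 2 + 2 * n%:Z + 2 < M * (n%:Z - 1).

Lemma hn2 : 2 <= n%:Z.
Proof. rewrite /nk; lia. Qed.
Lemma hM : n%:Z + 3 <= M.
Proof. have := hn2; move: HMn; rewrite expr2; nia. Qed.

Lemma split5 i : inr n.+4 i ->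
  inr n i \/ i = n.+1 \/ i = n.+2 \/ i = n.+3 \/ i = n.+4.
Proof. rewrite /inr; lia. Qed.

Lemma inr_lift i : inr n i -> inr n.+4 i.
Proof. rewrite /inr; lia. Qed.

Lemma G_fl2_hi c i x : (n < c)%N -> G k (fl i (fl c x)) = G k (fl i x).
Proof. by move=> h; rewrite fl_comm G_fl_hi. Qed.

Definition pat0 (x : st) := [/\ x n.+1 = false, x n.+2 = false, x n.+3 = false & x n.+4 = false].
Definition pat1 (x : st) := [/\ x n.+1 = true, x n.+2 = false, x n.+3 = true & x n.+4 = true].

Lemma lift_step x j : ustep (G k) n x j -> pat0 x \/ pat1 x -> ustep (G k.+1) n.+4 x j.
Proof.
case=> hj hgt hall hp.
have hb : bx x n.+2 = 0 by case: hp => -[_ h _ _]; rewrite bxF.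
have Hlo : forall i, inr n i -> G k.+1 (fl i x) = G k.+1 x + 4 * (G k (fl i x) - G k x).
  by move=> i hi; rewrite gain_lo // hb; ring.
have hM0 : 0 <= M by have := hM; have := hn2; lia.
have hS := S_ge0 x hM0.
have hn0 := hn2.
split; first exact: inr_lift.
  by rewrite Hlo //; lia.
move=> i hi hij; rewrite (Hlo j hj).
case: (split5 hi) => [hi'|[->|[->|[->|->]]]].
- by rewrite Hlo //; have := hall i hi' hij; lia.
- rewrite gain1; case: hp => -[h1 h2 h3 h4]; rewrite ?(bxF h2) ?(bxF h1) ?(bxT h1) ?(bxF h3) ?(bxT h3); nia.
- rewrite gain2; case: hp => -[h1 h2 h3 h4]; rewrite ?(bxF h2) ?(bxF h1) ?(bxT h1) ?(bxF h4) ?(bxT h4); nia.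
- rewrite gain3; case: hp => -[h1 h2 h3 h4]; rewrite ?(bxF h2) ?(bxF h1) ?(bxT h1) ?(bxF h3) ?(bxT h3) ?(bxF h4) ?(bxT h4); nia.
- rewrite gain4; case: hp => -[h1 h2 h3 h4]; rewrite ?(bxF h2) ?(bxF h3) ?(bxT h3) ?(bxF h4) ?(bxT h4); nia.
Qed.

Lemma hi_fl j x d : inr n j -> (n < d)%N -> fl j x d = x d.
Proof. by move=> hj hd; rewrite fl_ne //; apply/eqP; move: hj; rewrite /inr; lia. Qed.

Lemma pat_fl j x : inr n j -> pat0 x \/ pat1 x -> pat0 (fl j x) \/ pat1 (fl j x).
Proof.
move=> hj; have h := fun d => @hi_fl j x d hj.
by rewrite /pat0 /pat1 (h n.+1) ?(h n.+2) ?(h n.+3) ?(h n.+4) //; lia.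
Qed.

Lemma lift_path js x : upath (G k) n x js -> pat0 x \/ pat1 x -> upath (G k.+1) n.+4 x js.
Proof.
elim: js x => //= j js IH x [h1 h2] hp; split; first exact: lift_step.
apply: IH => //; case: h1 => hj _ _; exact: pat_fl.
Qed.

Lemma lift_locmax x : locmax (G k) n x -> pat1 x -> locmax (G k.+1) n.+4 x.
Proof.
move=> hl [h1 h2 h3 h4] i hi.
have hM0 : 0 <= M by have := hM; have := hn2; lia.
have hS := S_ge0 x hM0.
have hn0 := hn2.
case: (split5 hi) => [hi'|[->|[->|[->|->]]]].
- rewrite gain_lo // (bxF h2); have := hl i hi'; lia.
- rewrite gain1 (bxT h1) (bxF h2) (bxT h3); nia.
- rewrite gain2 (bxT h1) (bxF h2) (bxT h4); nia.
- rewrite gain3 (bxT h1) (bxT h3) (bxT h4); nia.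
- rewrite gain4 (bxF h2) (bxT h3) (bxT h4); nia.
Qed.

Lemma step_a x : locmax (G k) n x -> pat0 x -> ustep (G k.+1) n.+4 x n.+1.
Proof.
move=> hl [h1 h2 h3 h4].
have hM0 : 0 <= M by have := hM; have := hn2; lia.
have hS := S_ge0 x hM0.
have hn0 := hn2.
split; first by rewrite /inr; lia.
  by rewrite gain1 (bxF h1) (bxF h2) (bxF h3); lia.
move=> i hi hij; rewrite gain1 (bxF h1) (bxF h2) (bxF h3).
case: (split5 hi) => [hi'|[e|[->|[->|->]]]].
- rewrite gain_lo // (bxF h2); have := hl i hi'; lia.
- by rewrite e eqxx in hij.
- rewrite gain2 (bxF h1) (bxF h2) (bxF h4); nia.
- rewrite gain3 (bxF h1) (bxF h3) (bxF h4); nia.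
- rewrite gain4 (bxF h2) (bxF h3) (bxF h4); nia.
Qed.

Lemma step_b x : locmax (G k) n x -> pat0 x -> ustep (G k.+1) n.+4 (fl n.+1 x) n.+2.
Proof.
move=> hl [h1 h2 h3 h4].
have hM0 : 0 <= M by have := hM; have := hn2; lia.
have hn0 := hn2.
set y := fl n.+1 x.
have e1 : bx y n.+1 = 1 by rewrite /y bx_fl_eq (bxF h1).
have e2 : bx y n.+2 = 0 by rewrite /y bx_fl_ne ?(bxF h2) //; apply/eqP; lia.
have e3 : bx y n.+3 = 0 by rewrite /y bx_fl_ne ?(bxF h3) //; apply/eqP; lia.
have e4 : bx y n.+4 = 0 by rewrite /y bx_fl_ne ?(bxF h4) //; apply/eqP; lia.
have hS1 := S_ge0 y hM0.
have hS2 := S_le y hM0.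
have hMn := HMn; rewrite expr2 in hMn.
have key : n%:Z * (2*M + n%:Z + 2) + M + 2 < 3 * M * n%:Z by nia.
split; first by rewrite /inr; lia.
  by rewrite gain2 e1 e2 e4; nia.
move=> i hi hij; rewrite gain2 e1 e2 e4.
case: (split5 hi) => [hi'|[->|[e|[->|->]]]].
- have hG1 : G k y = G k x by rewrite /y (@G_fl_hi k n.+1).
  have hG2 : G k (fl i y) = G k (fl i x) by rewrite /y (@G_fl2_hi n.+1).
  rewrite gain_lo // e2 hG1 hG2; have := hl i hi'; nia.
- rewrite gain1 e1 e2 e3; nia.
- by rewrite e eqxx in hij.
- rewrite gain3 e1 e3 e4; nia.
- rewrite gain4 e2 e3 e4; nia.
Qed.

Ltac bxs := rewrite /bx /fl /z; repeat (case: eqP => ?; try (exfalso; lia)).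

Lemma phase4 K us y : 4 * K + n%:Z + 1 <= M -> wpath (G k) n K y us ->
  (forall d, (n < d)%N -> y d = false) -> upath (G k.+1) n.+4 (fl n.+2 (fl n.+1 y)) us.
Proof.
move=> hK; elim: us y => //= j us IH y [hj hyj hc hw hrest] hy.
have hM0 : 0 <= M by have := hM; have := hn2; lia.
have hn0 := hn2.
split; last first.
  rewrite (fl_comm j) (fl_comm j); apply: IH => // d hd; rewrite (hi_fl _ hj) //; exact: hy.
set x := fl n.+2 (fl n.+1 y).
have e1 : bx x n.+1 = 1 by rewrite /x; bxs; rewrite hy /=; lia.
have e2 : bx x n.+2 = 1 by rewrite /x; bxs; rewrite hy /=; lia.
have e3 : bx x n.+3 = 0 by rewrite /x; bxs; rewrite hy /=; lia.
have e4 : bx x n.+4 = 0 by rewrite /x; bxs; rewrite hy /=; lia.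
have hlo : forall i, inr n i -> bx x i = bx y i.
  by move=> i hi; rewrite /x !bx_fl_ne //; apply/eqP; move: hi; rewrite /inr; lia.
have hG1 : G k x = G k y by rewrite /x !(@G_fl_hi k).
have hG2 : forall i, G k (fl i x) = G k (fl i y) by move=> i; rewrite /x !(@G_fl2_hi).
have Hlo : forall i, inr n i -> G k.+1 (fl i x) = G k.+1 x
    - 4 * cost (G k) y i - (1 - 2 * bx y i) * (2 * M + i%:Z + 2).
  by move=> i hi; rewrite gain_lo // e2 hG1 hG2 hlo // /cost; ring.
have hS1 := S_ge0 x hM0.
have hS2 := S_le x hM0.
have hjy : bx y j = 1 by rewrite bxT.
have hjpos : 1 <= j%:Z by move: hj; rewrite /inr; lia.
have hjn : j%:Z <= n%:Z by move: hj; rewrite /inr; lia.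
have hchosen : M + n%:Z + 3 < G k.+1 (fl j x) - G k.+1 x.
  rewrite Hlo // hjy; lia.
split; first exact: inr_lift.
  lia.
move=> i hi hij.
case: (split5 hi) => [hi'|[->|[->|[->|->]]]].
- rewrite Hlo //.
  case hyi: (y i).
    have := hw 4 i (ler_nat _ 1 4) hi' hij hyi; rewrite (bxT hyi) Hlo // hjy; lia.
  rewrite (bxF hyi); have := Mk_ge k (fl i y) y.
  have : 0 <= i%:Z by [].
  rewrite /cost; lia.
- rewrite gain1 e1 e2 e3; nia.
- rewrite gain2 e1 e2 e4; nia.
- rewrite gain3 e1 e3 e4; nia.
- rewrite gain4 e2 e3 e4; nia.
Qed.

Lemma lo_neg s i : inr n i -> (forall d, inr n d -> s d = false) -> s n.+2 ->
  G k.+1 (fl i s) < G k.+1 s.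
Proof.
move=> hi hs hb; rewrite gain_lo // (bxT hb) (bxF (hs i hi)).
have := Mk_ge k (fl i s) s; have := hn2; have := hM.
have : 0 <= i%:Z by []. lia.
Qed.

Lemma Sz s : (forall d, inr n d -> s d = false) -> S k s = 0.
Proof. exact: S_z. Qed.

Lemma phase567 : upath (G k.+1) n.+4 (fl n.+2 (fl n.+1 z)) [:: n.+3; n.+4; n.+2].
Proof.
have hn0 := hn2.
have hM1 := hM.
have hMn2 : 2 * M <= M * n%:Z by nia.
have lo : forall s, (forall d, inr n d -> s d = false) -> forall d, inr n d -> fl n.+2 (fl n.+1 s) d = false.
  by move=> s hs d hd; rewrite !fl_ne ?hs //; apply/eqP; move: hd; rewrite /inr; lia.
split; [|split; [|split=> //]].
- set x := fl n.+2 (fl n.+1 z).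
  have hs : forall d, inr n d -> x d = false by move=> d hd; rewrite /x; bxs; move: hd; rewrite /inr; lia.
  have e1 : bx x n.+1 = 1 by rewrite /x; bxs.
  have e2 : bx x n.+2 = 1 by rewrite /x; bxs.
  have e3 : bx x n.+3 = 0 by rewrite /x; bxs.
  have e4 : bx x n.+4 = 0 by rewrite /x; bxs.
  rewrite /ustep gain3 e1 e3 e4; split; first by rewrite /inr; lia.
    lia.
  move=> i hi hij; case: (split5 hi) => [hi'|[->|[->|[e|->]]]].
  + have := lo_neg hi' hs; rewrite /x; bxs; nia.
  + rewrite gain1 e1 e2 e3; nia.
  + rewrite gain2 e1 e2 e4 (Sz hs); nia.
  + by rewrite e eqxx in hij.
  + rewrite gain4 e2 e3 e4; nia.
- set x := fl n.+3 (fl n.+2 (fl n.+1 z)).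
  have hs : forall d, inr n d -> x d = false by move=> d hd; rewrite /x; bxs; move: hd; rewrite /inr; lia.
  have e1 : bx x n.+1 = 1 by rewrite /x; bxs.
  have e2 : bx x n.+2 = 1 by rewrite /x; bxs.
  have e3 : bx x n.+3 = 1 by rewrite /x; bxs.
  have e4 : bx x n.+4 = 0 by rewrite /x; bxs.
  rewrite /ustep gain4 e2 e3 e4; split; first by rewrite /inr; lia.
    nia.
  move=> i hi hij; case: (split5 hi) => [hi'|[->|[->|[->|e]]]].
  + have := lo_neg hi' hs; rewrite /x; bxs; nia.
  + rewrite gain1 e1 e2 e3; nia.
  + rewrite gain2 e1 e2 e4 (Sz hs); nia.
  + rewrite gain3 e1 e3 e4; nia.
  + by rewrite e eqxx in hij.
- set x := fl n.+4 (fl n.+3 (fl n.+2 (fl n.+1 z))).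
  have hs : forall d, inr n d -> x d = false by move=> d hd; rewrite /x; bxs; move: hd; rewrite /inr; lia.
  have e1 : bx x n.+1 = 1 by rewrite /x; bxs.
  have e2 : bx x n.+2 = 1 by rewrite /x; bxs.
  have e3 : bx x n.+3 = 1 by rewrite /x; bxs.
  have e4 : bx x n.+4 = 1 by rewrite /x; bxs.
  rewrite /ustep gain2 e1 e2 e4 (Sz hs); split; first by rewrite /inr; lia.
    nia.
  move=> i hi hij; case: (split5 hi) => [hi'|[->|[e|[->|->]]]].
  + have := lo_neg hi' hs; rewrite /x; bxs; nia.
  + rewrite gain1 e1 e2 e3; nia.
  + by rewrite e eqxx in hij.
  + rewrite gain3 e1 e3 e4; nia.
  + rewrite gain4 e2 e3 e4; nia.
Qed.

Lemma wlift K us y : 0 <= K -> 4 * K + n%:Z + 1 <= M -> wpath (G k) n K y us ->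
  (forall d, (n < d)%N -> y d = false) ->
  wpath (G k.+1) n.+4 (5 * M * n%:Z) (fl n.+4 (fl n.+3 (fl n.+1 y))) us.
Proof.
move=> hK0 hK; elim: us y => //= j us IH y [hj hyj hc hw hrest] hy.
have hM0 : 0 <= M by have := hM; have := hn2; lia.
have hn0 := hn2.
have hM1 := hM.
have hMn2 : 2 * M <= M * n%:Z by nia.
set x := fl n.+4 (fl n.+3 (fl n.+1 y)).
have e1 : bx x n.+1 = 1 by rewrite /x; bxs; rewrite hy /=; lia.
have e2 : bx x n.+2 = 0 by rewrite /x; bxs; rewrite hy /=; lia.
have e3 : bx x n.+3 = 1 by rewrite /x; bxs; rewrite hy /=; lia.
have e4 : bx x n.+4 = 1 by rewrite /x; bxs; rewrite hy /=; lia.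
have hlo : forall i, inr n i -> x i = y i.
  by move=> i hi; rewrite /x !fl_ne //; apply/eqP; move: hi; rewrite /inr; lia.
have hG1 : G k x = G k y.
  by rewrite /x (@G_fl_hi k n.+4) ?(@G_fl_hi k n.+3) ?(@G_fl_hi k n.+1) //; lia.
have hG2 : forall i, G k (fl i x) = G k (fl i y).
  by move=> i; rewrite /x (@G_fl2_hi n.+4) ?(@G_fl2_hi n.+3) ?(@G_fl2_hi n.+1) //; lia.
have Clo : forall i, inr n i -> cost (G k.+1) x i = 4 * cost (G k) y i.
  by move=> i hi; rewrite /cost gain_lo // e2 hG1 hG2; ring.
have C1 : cost (G k.+1) x n.+1 = 3 + M by rewrite /cost gain1 e1 e2 e3; ring.
have C3 : cost (G k.+1) x n.+3 = 2 + M + 5 * M * n%:Z by rewrite /cost gain3 e1 e3 e4; ring.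
have C4 : cost (G k.+1) x n.+4 = 5 * M * n%:Z by rewrite /cost gain4 e2 e3 e4; ring.
have hjn : j%:Z <= n%:Z by move: hj; rewrite /inr; lia.
have hCj : cost (G k) y j <= K := hc.
split.
- exact: inr_lift.
- by rewrite hlo.
- rewrite Clo //; nia.
- move=> w i hw1 hi hij hxi.
  rewrite Clo //.
  have hp1 : 0 <= (w - 1) * (M - n%:Z - 1 - 4 * cost (G k) y j) by apply: mulr_ge0; lia.
  have hp2 : 0 <= (w - 1) * (n%:Z + 1) by apply: mulr_ge0; lia.
  have hp3 : 0 <= (w - 1) * (5 * M * n%:Z - 3 - M) by apply: mulr_ge0; nia.
  case: (split5 hi) => [hi'|[->|[e|[->|->]]]].
  + rewrite Clo //.
    have h1 : 1 <= 4 * w by lia.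
    have hyi : y i by rewrite -hlo.
    have := hw (4 * w) i h1 hi' hij hyi; lia.
  + rewrite C1; nia.
  + by move: hxi; rewrite e => /bxT; rewrite e2.
  + rewrite C3; nia.
  + rewrite C4; nia.
- rewrite /x (fl_comm j) (fl_comm j) (fl_comm j); apply: IH => // d hd.
  rewrite (hi_fl _ hj) //; exact: hy.
Qed.

Lemma wtail : wpath (G k.+1) n.+4 (5 * M * n%:Z) (fl n.+4 (fl n.+3 (fl n.+1 z))) [:: n.+1; n.+4; n.+3].
Proof.
have hn0 := hn2.
have hM1 := hM.
have hMn2 : 2 * M <= M * n%:Z by nia.
have nolo : forall (x : st) i, (forall d, inr n d -> x d = false) -> inr n.+4 i -> x i ->
     i = n.+1 \/ i = n.+2 \/ i = n.+3 \/ i = n.+4.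
  move=> x i hx hi hxi; case: (split5 hi) => [hi'|]; last by [].
  by rewrite hx in hxi.
split.
- by rewrite /inr; lia.
- by bxs.
- rewrite /cost (gain1 k (fl n.+4 (fl n.+3 (fl n.+1 z)))); bxs; nia.
- move=> w i hw1 hi hij hxi.
  have hp : 0 <= (w - 1) * (5 * M * n%:Z - 3 - M) by apply: mulr_ge0; nia.
  have hx : forall d, inr n d -> (fl n.+4 (fl n.+3 (fl n.+1 z))) d = false.
    by move=> d hd; bxs; move: hd; rewrite /inr; lia.
  case: (nolo _ i hx hi hxi) => [e|[e|[e|e]]]; rewrite e in hij hxi *.
  + by rewrite eqxx in hij.
  + by move: hxi; bxs.
  + rewrite /cost (gain1 k (fl n.+4 (fl n.+3 (fl n.+1 z)))) (gain3 k (fl n.+4 (fl n.+3 (fl n.+1 z)))); bxs; nia.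
  + rewrite /cost (gain1 k (fl n.+4 (fl n.+3 (fl n.+1 z)))) (gain4 k (fl n.+4 (fl n.+3 (fl n.+1 z)))); bxs; nia.
split.
- by rewrite /inr; lia.
- by bxs.
- rewrite /cost (gain4 k (fl n.+1 (fl n.+4 (fl n.+3 (fl n.+1 z))))); bxs; nia.
- move=> w i hw1 hi hij hxi.
  have hx : forall d, inr n d -> (fl n.+1 (fl n.+4 (fl n.+3 (fl n.+1 z)))) d = false.
    by move=> d hd; bxs; move: hd; rewrite /inr; lia.
  case: (nolo _ i hx hi hxi) => [e|[e|[e|e]]]; rewrite e in hij hxi *.
  + by move: hxi; bxs.
  + by move: hxi; bxs.
  + rewrite /cost (gain4 k (fl n.+1 (fl n.+4 (fl n.+3 (fl n.+1 z))))) (gain3 k (fl n.+1 (fl n.+4 (fl n.+3 (fl n.+1 z))))); bxs; nia.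
  + by rewrite eqxx in hij.
split=> //.
- by rewrite /inr; lia.
- by bxs.
- rewrite /cost (gain3 k (fl n.+4 (fl n.+1 (fl n.+4 (fl n.+3 (fl n.+1 z)))))); bxs; nia.
- move=> w i hw1 hi hij hxi.
  have hx : forall d, inr n d -> (fl n.+4 (fl n.+1 (fl n.+4 (fl n.+3 (fl n.+1 z))))) d = false.
    by move=> d hd; bxs; move: hd; rewrite /inr; lia.
  case: (nolo _ i hx hi hxi) => [e|[e|[e|e]]]; rewrite e in hij hxi *.
  + by move: hxi; bxs.
  + by move: hxi; bxs.
  + by rewrite eqxx in hij.
  + by move: hxi; bxs.
Qed.

Lemma wtail_run : run (fl n.+4 (fl n.+3 (fl n.+1 z))) [:: n.+1; n.+4; n.+3] = z.
Proof. apply: functional_extensionality => d /=; bxs; lia. Qed.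

Lemma uniq_step (IH : forall x, locmax (G k) n x -> agree n x (Tk k)) x :
  locmax (G k.+1) n.+4 x -> agree n.+4 x (Tk k.+1).
Proof.
move=> hl.
have hn0 := hn2.
have hM1 := hM.
have hMn2 : 2 * M <= M * n%:Z by nia.
have i1 : inr n.+4 n.+1 by rewrite /inr; lia.
have i2 : inr n.+4 n.+2 by rewrite /inr; lia.
have i3 : inr n.+4 n.+3 by rewrite /inr; lia.
have i4 : inr n.+4 n.+4 by rewrite /inr; lia.
have ba : forall d, bx x d = 0 \/ bx x d = 1 by move=> d; rewrite /bx; case: (x d); [right|left].
have Hb : x n.+2 = false.
  apply/negP => hb.
  have hlo : forall i, inr n i -> x i = false.
    move=> i hi; apply/negP => hxi; have := hl i (inr_lift hi).
    rewrite gain_lo // (bxT hb) (bxT hxi); have := Mk_ge k x (fl i x).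
    have : 0 <= i%:Z by []. lia.
  have hS : S k x = 0 := S_z hlo.
  have hc : x n.+3.
    apply/negP => /negP/negbTE hc; have := hl _ i3; rewrite gain3 (bxF hc).
    case: (ba n.+1) => ->; case: (ba n.+4) => ->; nia.
  have hd : x n.+4.
    apply/negP => /negP/negbTE hd; have := hl _ i4; rewrite gain4 (bxF hd) (bxT hb) (bxT hc); nia.
  have := hl _ i2; rewrite gain2 hS (bxT hb) (bxT hd).
  case: (ba n.+1) => ->; nia.
have hlk : locmax (G k) n x.
  by move=> i hi; have := hl i (inr_lift hi); rewrite gain_lo // (bxF Hb); lia.
have hag := IH x hlk.
have ha : x n.+1.
  apply/negP => /negP/negbTE ha; have := hl _ i1; rewrite gain1 (bxF ha) (bxF Hb).
  case: (ba n.+3) => ->; nia.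
have hc : x n.+3.
  apply/negP => /negP/negbTE hc; have := hl _ i3; rewrite gain3 (bxF hc) (bxT ha).
  case: (ba n.+4) => ->; nia.
have hd : x n.+4.
  apply/negP => /negP/negbTE hd; have := hl _ i4; rewrite gain4 (bxF hd) (bxF Hb) (bxT hc); nia.
move=> c hc'; rewrite TkS.
case: (split5 hc') => [hi|[->|[->|[->|->]]]].
- by rewrite !fl_ne ?hag //; apply/eqP; move: hi; rewrite /inr; lia.
- rewrite /fl; repeat (case: eqP => ?; try (exfalso; lia)); by rewrite Tk_hi //; lia.
- rewrite /fl; repeat (case: eqP => ?; try (exfalso; lia)); by rewrite Tk_hi //; lia.
- rewrite /fl; repeat (case: eqP => ?; try (exfalso; lia)); by rewrite Tk_hi //; lia.
- rewrite /fl; repeat (case: eqP => ?; try (exfalso; lia)); by rewrite Tk_hi //; lia.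
Qed.
End Step.

Definition Level k := [/\
  exists js, [/\ upath (G k) (nk k) z js, run z js = Tk k & (2 ^ k.+1 <= size js)%N],
  locmax (G k) (nk k) (Tk k),
  (forall x, locmax (G k) (nk k) x -> agree (nk k) x (Tk k)),
  exists K us, [/\ 0 <= K, 4 * K + (nk k)%:Z + 1 <= Mk k, wpath (G k) (nk k) K (Tk k) us
                   & run (Tk k) us = z]
  & (nk k)%:Z ^+ 2 + 2 * (nk k)%:Z + 2 < Mk k * ((nk k)%:Z - 1) ].

Lemma wpath_cat f N K x js1 js2 : wpath f N K x js1 -> wpath f N K (run x js1) js2 ->
  wpath f N K x (js1 ++ js2).
Proof. by elim: js1 x => //= j js IH x [h1 h2 h3 h4 h5] h6; split=> //; apply: IH. Qed.

Lemma notin_all N c js : all (inr N) js -> (N < c)%N -> c \notin js.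
Proof. move=> /allP h hc; apply/negP => /h; rewrite /inr; lia. Qed.

Lemma G0 x : G 0 x = 2 * bx x 1 + bx x 2.
Proof. by []. Qed.

Lemma level0 : Level 0.
Proof.
have hM : 12 <= Mk 0.
  have := Mk_ge 0 (Tk 0) z; rewrite !G0 /bx /Tk /z /=; lia.
split.
- exists [:: 1%N; 2%N]; split => //.
  + split; [split; [by []|by rewrite !G0 /bx /fl /z|] | split=> //; split; [by []|by rewrite !G0 /bx /fl /z|]].
    * move=> i; rewrite /inr /nk => hi hij; have -> : i = 2%N by lia.
      by rewrite !G0 /bx /fl /z.
    * move=> i; rewrite /inr /nk => hi hij; have -> : i = 1%N by lia.
      by rewrite !G0 /bx /fl /z.
  + by apply: functional_extensionality => d; rewrite /= /fl /z /Tk /nk; repeat (case: eqP => ?); lia.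
- move=> i; rewrite /inr /nk => hi; have : i = 1%N \/ i = 2%N by lia.
  by case=> ->; rewrite !G0 /bx /fl /Tk /nk.
- move=> x hl c; rewrite /inr /nk => hc.
  have h1 := hl 1%N isT; have h2 := hl 2%N isT.
  rewrite !G0 !bx_fl_eq !bx_fl_ne // in h1 h2.
  have : c = 1%N \/ c = 2%N by lia.
  case=> ->; rewrite /Tk /nk /=; move: h1 h2; rewrite /bx; case: (x 1%N); case: (x 2%N) => //=.
- exists 2, [:: 2%N; 1%N]; split => //.
  + rewrite /nk; lia.
  + split; [by []|by []|by rewrite /cost !G0 /bx /fl /Tk /nk|
           |split; [by []|by rewrite /fl /Tk|by rewrite /cost !G0 /bx /fl /Tk /nk| |by []]].
    * move=> w i hw; rewrite /inr /nk => hi hij _; have -> : i = 1%N by lia.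
      rewrite /cost !G0 /bx /fl /Tk /nk /=; lia.
    * move=> w i hw; rewrite /inr /nk => hi hij; have -> : i = 2%N by lia.
      by rewrite /fl /Tk.
  + by apply: functional_extensionality => d; rewrite /= /fl /z /Tk /nk; repeat (case: eqP => ?); lia.
- rewrite /nk /=; lia.
Qed.

Lemma arith1 (M n : int) : 2 <= n -> n + 3 <= M -> 0 <= 5 * M * n.
Proof. move=> h1 h2; nia. Qed.
Lemma arith2 (M M' : int) (m : nat) : 2 <= m%:Z -> m%:Z + 3 <= M -> 20 + 4 * M + 20 * M * m%:Z <= M' ->
  4 * (5 * M * m%:Z) + (m.+4)%:Z + 1 <= M'.
Proof. move=> h1 h2 h3; lia. Qed.
Lemma arith3 (M M' : int) (m : nat) : 2 <= m%:Z -> m%:Z + 3 <= M -> 20 + 4 * M + 20 * M * m%:Z <= M' ->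
  (m.+4)%:Z ^+ 2 + 2 * (m.+4)%:Z + 2 < M' * ((m.+4)%:Z - 1).
Proof.
move=> h1 h2 h3.
have -> : (m.+4)%:Z = m%:Z + 4 by lia.
move: h1 h2 h3; set n := m%:Z => h1 h2 h3.
have h4 : 20 * (n * n) <= M' by nia.
have h5 : 20 * (n * n) * (n + 3) <= M' * (n + 3) by apply: ler_wpM2r => //; lia.
rewrite expr2; nia.
Qed.

Lemma pat1_Y k : pat1 k (fl (nk k).+4 (fl (nk k).+3 (fl (nk k).+1 z))).
Proof.
rewrite /pat1; split.
- by rewrite (@fl_ne (nk k).+4) ?(@fl_ne (nk k).+3) ?fl_eq //; apply/eqP; lia.
- by rewrite (@fl_ne (nk k).+4) ?(@fl_ne (nk k).+3) ?(@fl_ne (nk k).+1) //; apply/eqP; lia.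
- by rewrite (@fl_ne (nk k).+4) ?fl_eq ?(@fl_ne (nk k).+1) //; apply/eqP; lia.
- by rewrite fl_eq (@fl_ne (nk k).+3) ?(@fl_ne (nk k).+1) //; apply/eqP; lia.
Qed.

Ltac nin h := match goal with |- is_true (~~ (?c \in ?s)) => apply: (@notin_all _ c s h); lia end.

Lemma level_step k : Level k -> Level k.+1.
Proof.
case=> [[js [hjs hrun hsz]] hloc huniq [K [us [hK0 hK hw hrun2]]] HMn].
set n := nk k.
have hn0 := hn2 HMn.
have hM1 := hM HMn.
have hall := upath_all hjs.
have hallu := wpath_all hw.
have hz_hi : forall d, (n < d)%N -> z d = false by [].
have hT_hi : forall d, (n < d)%N -> Tk k d = false by move=> d; apply: Tk_hi.
have hGTz : G k z <= G k (Tk k) by rewrite -hrun; apply: upath_mono hjs.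
set Y := fl n.+2 (fl n.+4 (fl n.+3 (fl n.+2 (fl n.+1 z)))).
have hY : Y = fl n.+4 (fl n.+3 (fl n.+1 z)).
  by apply: functional_extensionality => d; rewrite /Y /fl /z; repeat (case: eqP => ?); lia.
have agYz : agree n Y z.
  by move=> d hd; rewrite hY /fl /z; repeat (case: eqP => ?); move: hd; rewrite /inr; lia.
have agT : agree n (Tk k.+1) (Tk k).
  by move=> d hd; apply: Tk_lo; move: hd; rewrite /inr; lia.
have p1T : pat1 k (Tk k.+1).
  by rewrite /pat1 /Tk /n /nk; split; lia.
have M'ge : 20 + 4 * Mk k + 20 * Mk k * n%:Z <= Mk k.+1.
  have := Mk_ge k.+1 (Tk k.+1) z.
  rewrite !Gdec (G_local agT) (S_z (fun d _ => erefl)) .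
  rewrite (bxT (_ : Tk k.+1 n.+1)); last by rewrite /Tk /n /nk; lia.
  rewrite (bxF (_ : Tk k.+1 n.+2 = false)); last by rewrite /Tk /n /nk; lia.
  rewrite (bxT (_ : Tk k.+1 n.+3)); last by rewrite /Tk /n /nk; lia.
  rewrite (bxT (_ : Tk k.+1 n.+4)); last by rewrite /Tk /n /nk; lia.
  have hz0 : forall d, bx z d = 0 by [].
  rewrite !hz0 /n; lia.
split.
- exists (js ++ [:: n.+1; n.+2] ++ us ++ [:: n.+3; n.+4; n.+2] ++ js).
  rewrite nkS; split.
  + apply: (@upath_cat _ _ _ js); first by apply: (lift_path HMn) => //; left; split.
    rewrite hrun.
    apply: (@upath_cat _ _ _ [:: n.+1; n.+2]).
      split; first by apply: (step_a HMn) => //; split; apply: hT_hi; lia.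
      split=> //; apply: (step_b HMn) => //; split; apply: hT_hi; lia.
    have -> : run (Tk k) [:: n.+1; n.+2] = fl n.+2 (fl n.+1 (Tk k)) by [].
    apply: (@upath_cat _ _ _ us); first exact: (phase4 HMn hK hw hT_hi).
    rewrite run_fl ?run_fl ?hrun2; try (rewrite /n; nin hallu).
    apply: (@upath_cat _ _ _ [:: n.+3; n.+4; n.+2] js); first exact: (phase567 HMn).
    have eY : run (fl n.+2 (fl n.+1 z)) [:: n.+3; n.+4; n.+2] = Y by reflexivity.
    rewrite eY.
    apply: (lift_path HMn); last by right; rewrite hY; exact: pat1_Y.
    by apply: (upath_agree (@G_local k) _ hjs) => d hd; rewrite agYz.
  + rewrite !run_cat hrun.
    have -> : run (Tk k) [:: n.+1; n.+2] = fl n.+2 (fl n.+1 (Tk k)) by reflexivity.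
    rewrite (@run_fl n.+2) ?(@run_fl n.+1) ?hrun2; try (rewrite /n; nin hallu).
    have eY : run (fl n.+2 (fl n.+1 z)) [:: n.+3; n.+4; n.+2] = Y by reflexivity.
    rewrite eY hY (@run_fl n.+4) ?(@run_fl n.+3) ?(@run_fl n.+1) ?hrun; try (rewrite /n; nin hall).
    by rewrite TkS.
  + rewrite !size_cat /=; move: hsz; rewrite (expnS 2 k.+1); lia.
- rewrite nkS; apply: (lift_locmax HMn) => //.
  apply: (locmax_agree (@G_local k) _ hloc) => d hd; by rewrite agT.
- by move=> x; rewrite nkS; exact: (uniq_step HMn huniq).
- exists (5 * Mk k * n%:Z), (us ++ [:: n.+1; n.+4; n.+3]); rewrite nkS; split.
  + exact: arith1 hn0 hM1.
  + exact: arith2 hn0 hM1 M'ge.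
  + rewrite TkS; apply: wpath_cat; first exact: (wlift HMn hK0 hK hw hT_hi).
    rewrite (@run_fl (nk k).+4) 1?(@run_fl (nk k).+3) 1?(@run_fl (nk k).+1) 1?hrun2;
      try (rewrite /n; nin hallu).
    exact: (wtail HMn).
  + rewrite TkS run_cat (@run_fl (nk k).+4) 1?(@run_fl (nk k).+3) 1?(@run_fl (nk k).+1) 1?hrun2;
      try (rewrite /n; nin hallu).
    exact: (wtail_run HMn).
- rewrite nkS; exact: arith3 hn0 hM1 M'ge.
Qed.


Lemma level_all k : Level k.
Proof. elim: k => [|k IH]; [exact: level0 | exact: level_step]. Qed.

Lemma nk_div k : (nk k %/ 4 = k)%N.
Proof. rewrite /nk; lia. Qed.

Lemma g_tof k x : g (tof (nk k) x) = G k x.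
Proof. by rewrite /g nk_div G_tof. Qed.

Lemma flip_tof N (i : 'I_N) x : flip i (tof N x) = tof N (fl i.+1 x).
Proof. by apply/ffunP => j; rewrite !ffunE /fl. Qed.

Lemma ustep_gsu k x j : ustep (G k) (nk k) x j ->
  greedy_step_unique (@g (nk k)) (tof (nk k) x) (tof (nk k) (fl j x)).
Proof.
case=> hj hgt hall.
have hj' : (j.-1 < nk k)%N by move: hj; rewrite /inr; lia.
have ej : (Ordinal hj').+1 = j by rewrite /=; move: hj; rewrite /inr; lia.
split.
- by exists (Ordinal hj'); rewrite flip_tof ej.
- by rewrite !g_tof.
- move=> i; rewrite flip_tof => hne; rewrite !g_tof; apply: hall.
    by rewrite /inr; have := ltn_ord i; lia.
  by apply/eqP => e; rewrite e eqxx in hne.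
Qed.

Definition ofv N (v : {ffun 'I_N -> bool}) : st :=
  fun c => if c is c'.+1 then (if insub c' is Some i then v i else false) else false.

Lemma tof_ofv N v : tof N (ofv v) = v.
Proof. by apply/ffunP => i; rewrite ffunE /ofv valK. Qed.

Lemma tof_agree N x y : agree N x y -> tof N x = tof N y.
Proof. move=> h; apply/ffunP => i; rewrite !ffunE h // /inr; have := ltn_ord i; lia. Qed.

Lemma tof_T k : tof (nk k) (Tk k) = target (nk k).
Proof. apply/ffunP => i; rewrite !ffunE /Tk; have := ltn_ord i; rewrite /nk; lia. Qed.

Lemma tof_z N : tof N z = [ffun=> false].
Proof. by apply/ffunP => i; rewrite !ffunE. Qed.

Lemma half_nk k : ((nk k)./2 = (2*k).+1)%N.
Proof.
rewrite /nk (_ : (4*k+2) = ((2*k).+1).*2)%N ?doubleK //; rewrite -mul2n; lia.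
Qed.

Unset Implicit Arguments.
Theorem theorem2 (n : nat) (hn : (n %% 4 = 2)%N) :
  exists p : seq {ffun 'I_n -> bool},
    [/\ head [ffun=> false] p = [ffun=> false],
        greedy_path_no_ties (@g n) p,
        last [ffun=> false] p = target n,
        (forall v, is_local_max (@g n) v -> v = target n) &
        (2 ^ (n./2) < (size p).-1 ^ 2)%N ].
Proof.
have hk : n = nk (n %/ 4)%N by rewrite /nk {1}(divn_eq n 4) hn; lia.
move: (n %/ 4)%N hk => k hk; subst n.
have [[js [hjs hrun hsz]] hloc huniq _ _] := level_all k.
exists (map (tof (nk k)) (states z js)); split.
- by case: js {hjs hrun hsz} => [|j js] /=; rewrite tof_z.
- split.
  + by rewrite size_map size_states.
  + move=> t; rewrite size_map size_states ltnS => ht.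
    have [hst heq] := upath_nth hjs ht.
    have s1 : (t < size (states z js))%N by rewrite size_states; lia.
    have s2 : (t.+1 < size (states z js))%N by rewrite size_states; lia.
    rewrite -tof_z (nth_map z _ _ s1) (nth_map z _ _ s2) heq.
    exact: ustep_gsu.
  + rewrite -tof_z last_map last_states hrun => i.
    rewrite flip_tof !g_tof; apply: hloc; rewrite /inr; have := ltn_ord i; lia.
- by rewrite -tof_z last_map last_states hrun tof_T.
- move=> v hv; rewrite -(tof_ofv v) -tof_T; apply: tof_agree; apply: huniq => c hc.
  have hc' : (c.-1 < nk k)%N by move: hc; rewrite /inr; lia.
  have ec : (Ordinal hc').+1 = c by rewrite /=; move: hc; rewrite /inr; lia.
  have := hv (Ordinal hc'); rewrite -{1 2}(tof_ofv v) flip_tof ec !g_tof //.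
- rewrite size_map size_states /= half_nk.
  have h1 : (2 ^ (2 * k).+2 <= size js ^ 2)%N.
    by rewrite (_ : (2 * k).+2 = (k.+1) * 2)%N ?expnM ?leq_exp2r //; lia.
  apply: leq_trans h1; rewrite ltn_exp2l //.
Qed.
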